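(* For every positive integer $h$ there are $\eta=\eta(h)>0$ and $\alpha=\alpha(h)>0$ such that the following holds for every oriented graph $H$ on $h$ vertices. Let $H_1,\dots,H_\ell$ be a partition of $V(H)$ such that each $H_i$ induces an acyclic digraph and for every $1\le i<j\le\ell$ either $H_i\rightarrow H_j$ or $H_j\rightarrow H_i$. Let $W_1,\dots,W_\ell$ be pairwise disjoint vertex sets in a tournament $T$ such that (1) $|W_i|\ge 2^{h-1}$ for every $1\le i\le\ell$, and (2) for every $1\le i\ne j\le\ell$, if $H_i\rightarrow H_j$ then $d(W_i,W_j)\ge 1-\eta$. Then $T$ contains at least $\alpha\cdot\prod_{i=1}^{\ell}|W_i|^{h_i}$ copies of $H$, where $h_i=|H_i|$.
   Context: An oriented graph is a directed graph without loops with at most one edge between any two distinct vertices. For disjoint vertex sets $X,Y$ of a digraph, $X\rightarrow Y$ means there is no pair $(x,y)\in X\times Y$ with an edge from $y$ to $x$. For disjoint $X,Y\subseteq V(T)$ in a tournament $T$, $d(X,Y)$ is the fraction of pairs $(x,y)\in X\times Y$ with $(x,y)\in E(T)$. A copy of $H$ is a (not necessarily induced) subgraph isomorphic to $H$. *)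

(* Defs.v *)
From HB Require Import structures.
From mathcomp Require Import all_boot all_order all_algebra.
Set Implicit Arguments. Unset Strict Implicit. Unset Printing Implicit Defensive.
Import Order.TTheory GRing.Theory Num.Theory.

Definition oriented (V : finType) (e : rel V) : Prop :=
  irreflexive e /\ forall x y, e x y -> ~~ e y x.

Definition tournament (V : finType) (t : rel V) : Prop :=
  oriented t /\ forall x y, x != y -> t x y || t y x.

Definition arrow (V : finType) (e : rel V) (X Y : {set V}) : Prop :=
  forall x y, x \in X -> y \in Y -> ~~ e y x.

(* The digraph induced by e on A has no directed cycle (closed walk of
   positive length inside A). *)
Definition acyclic_on (V : finType) (e : rel V) (A : {set V}) : Prop :=
  forall (x : V) (p : seq V), x \in A -> all (mem A) p ->
    path e x p -> last x p = x -> p = [::].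

Definition dens (R : realFieldType) (V : finType) (t : rel V) (X Y : {set V}) : R :=
  (#|[set p in setX X Y | t p.1 p.2]|%:R / (#|X| * #|Y|)%:R)%R.

(* (S,E) is a (not necessarily induced) subgraph of T isomorphic to H. *)
Definition is_copy (h : nat) (VT : finType) (e : rel 'I_h) (t : rel VT)
    (SE : {set VT} * {set (VT * VT)}) : bool :=
  [forall p in SE.2, t p.1 p.2] &&
  [exists f : {ffun 'I_h -> VT}, injectiveb f && (SE.1 == f @: [set: 'I_h]) &&
     (SE.2 == [set (f p.1, f p.2) | p in [set q : 'I_h * 'I_h | e q.1 q.2]])].

Definition ncopies (h : nat) (VT : finType) (e : rel 'I_h) (t : rel VT) : nat :=
  #|[set SE : {set VT} * {set (VT * VT)} | is_copy e t SE]|.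

Definition block (h l : nat) (part : 'I_h -> 'I_l) (i : 'I_l) : {set 'I_h} :=
  [set x | part x == i].

(* Main.v *)
Require Import Defs.
From HB Require Import structures.
From mathcomp Require Import all_boot all_order all_algebra.
From mathcomp Require Import zify ring lra.
Import Order.TTheory GRing.Theory Num.Theory.
Set Implicit Arguments. Unset Strict Implicit. Unset Printing Implicit Defensive.

Lemma card_pairs (T U : finType) (A : {set T}) (F : T -> {set U}) :
  #|[set p : T * U | (p.1 \in A) && (p.2 \in F p.1)]| = \sum_(x in A) #|F x|.
Proof.
rewrite -sum1dep_card big_mkcond /=.
under [RHS]eq_bigr => x _ do rewrite -sum1_card.
rewrite [RHS]big_mkcond /=.
under [RHS]eq_bigr => x _ do rewrite big_mkcond /=.
have -> : \sum_i (if i \in A then \sum_i0 (if i0 \in F i then 1 else 0) else 0)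
   = \sum_i \sum_i0 (if (i \in A) && (i0 \in F i) then 1 else 0).
  by apply: eq_bigr => i _; case: (i \in A) => //=; rewrite big1.
by rewrite pair_big.
Qed.

Definition goodf (h : nat) (VT : finType) (t : rel VT) (v0 : VT) (kap : 'I_h -> nat)
  (B : {set 'I_h}) (W : {set VT}) (g : {ffun 'I_h -> VT}) : bool :=
  [forall x, if x \in B then g x \in W else g x == v0] &&
  [forall u, forall v, [&& u \in B, v \in B & kap u < kap v] ==> t (g u) (g v)].

Definition gset h VT t v0 kap B W := [set g | @goodf h VT t v0 kap B W g].

Definition outn (VT : finType) (t : rel VT) (W : {set VT}) (x : VT) := W :&: [set y | t x y].

Lemma step h (VT : finType) (t : rel VT) (v0 : VT) (kap : 'I_h -> nat) (B : {set 'I_h}) (W : {set VT}) (u0 : 'I_h) : injective kap -> u0 \in B ->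
  (forall u, u \in B -> kap u0 <= kap u) ->
  \sum_(x in W) #|@gset h VT t v0 kap (B :\ u0) (outn t W x)| <= #|gset t v0 kap B W|.
Proof.
move=> kinj u0B kmin.
rewrite -card_pairs.
pose upd (p : VT * {ffun 'I_h -> VT}) : {ffun 'I_h -> VT} := [ffun y => if y == u0 then p.1 else p.2 y].
rewrite -(@card_in_imset _ _ upd); last first.
  move=> [x1 g1] [x2 g2]; rewrite !inE /= => /andP[_ G1] /andP[_ G2] E.
  have E1 : upd (x1, g1) u0 = upd (x2, g2) u0 by rewrite E.
  rewrite /upd /= !ffunE eqxx /= in E1.
  rewrite E1; congr pair; apply/ffunP => y.
  have Ey : upd (x1, g1) y = upd (x2, g2) y by rewrite E.
  rewrite /upd /= !ffunE in Ey.
  case: (eqVneq y u0) Ey => [-> _|//].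
  move: G1 G2 => /andP[/forallP/(_ u0) + _] /andP[/forallP/(_ u0) + _].
  by rewrite !inE eqxx /= => /eqP -> /eqP ->.
apply: subset_leq_card; apply/subsetP => g /imsetP[[x g'] + ->].
rewrite !inE /= => /andP[xW]; rewrite /goodf => /andP[/forallP G1 /forallP G2].
apply/andP; split.
  apply/forallP => y; rewrite /upd ffunE /=; case: (eqVneq y u0) => [->|yu]; first by rewrite u0B.
  have := G1 y; rewrite !inE yu /=; case: (y \in B) => //.
  by rewrite ?inE => /andP[].
apply/forallP => u; apply/forallP => v; apply/implyP => /and3P[uB vB kuv].
rewrite /upd !ffunE /=.
have vu : v != u0.
  apply/eqP => E; subst v; have := kmin u uB; lia.
rewrite (negbTE vu).
have := G1 v; rewrite /outn ?inE vu vB /= => /andP[_] txv.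
case: (eqVneq u u0) => [_|uu]; first by [].
have := G2 u => /forallP/(_ v); rewrite !inE uu vu uB vB kuv /=; exact.
Qed.

Lemma deg_sum (VT : finType) (t : rel VT) (W : {set VT}) :
  (forall x y, x != y -> t x y || t y x) ->
  #|W| * #|W| <= #|W| + 2 * \sum_(x in W) #|outn t W x|.
Proof.
move=> tot.
rewrite -card_pairs.
set E := [set p | _].
pose sw (p : VT * VT) := (p.2, p.1).
have swi : injective sw by move=> [a b] [c d] [-> ->].
have cE : #|sw @: E| = #|E| by rewrite card_imset.
have sub : setX W W \subset (E :|: sw @: E) :|: [set (x, x) | x in W].
  apply/subsetP => [[a b]]; rewrite !inE /= => /andP[aW bW].
  case: (eqVneq a b) => [<-|ab]; first by rewrite imset_f ?orbT.
  case/orP: (tot a b ab) => tab.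
    by rewrite ?inE /= aW bW tab.
  apply/orP; left; apply/orP; right; apply/imsetP; exists (b, a) => //.
  by rewrite ?inE /= aW bW tab.
have := subset_leq_card sub; rewrite cardsX.
move=> le; apply: (leq_trans le).
apply: (leq_trans (leq_card_setU _ _).1).
have := leq_imset_card (fun x => (x, x)) W.
have := (leq_card_setU E (sw @: E)).1.
rewrite cE; lia.
Qed.


Lemma outn_le (VT : finType) (t : rel VT) W x : #|outn t W x| <= #|W|.
Proof. by apply: subset_leq_card; apply: subsetIl. Qed.

Lemma max_deg (VT : finType) (t : rel VT) (W : {set VT}) :
  (forall x y, x != y -> t x y || t y x) -> 2 <= #|W| ->
  exists2 x, x \in W & #|W| <= 2 * #|outn t W x| + 1.
Proof.
move=> tot n2.
case: (boolP [exists x in W, #|W| <= 2 * #|outn t W x| + 1]).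
  by move/exists_inP.
move/exists_inPn => H; exfalso.
have := deg_sum W tot.
have : 2 * \sum_(x in W) #|outn t W x| <= \sum_(x in W) (#|W| - 2).
  rewrite big_distrr /=; apply: leq_sum => x xW; have := H x xW; lia.
rewrite sum_nat_const.
set n := #|W|; set S := \sum_(x in W) _.
move=> h1 h2.
have : n * n <= n + n * (n - 2) by lia.
nia.
Qed.

Lemma many_high (VT : finType) (t : rel VT) (W : {set VT}) :
  (forall x y, x != y -> t x y || t y x) -> 4 <= #|W| ->
  #|W| <= 8 * #|[set x | (x \in W) && (#|W| <= 4 * #|outn t W x|)]|.
Proof.
move=> tot n4.
have ds := deg_sum W tot.
set n := #|W| in ds n4 *.
pose P x := n <= 4 * #|outn t W x|.
have e1 : \sum_(i in W) #|outn t W i| = \sum_(i in W | P i) #|outn t W i| + \sum_(i in W | ~~ P i) #|outn t W i| by apply: bigID.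
have e2 : n * n = \sum_(i in W | P i) n + \sum_(i in W | ~~ P i) n.
  by rewrite -bigID sum_nat_const.
have c1 : \sum_(i in W | P i) n = #|[set x | (x \in W) && P x]| * n.
  by rewrite -sum1dep_card big_distrl /= mul1n.
have c2 : \sum_(i in W | ~~ P i) n = #|[set x | (x \in W) && ~~ P x]| * n.
  by rewrite -sum1dep_card big_distrl /= mul1n.
have b1 : \sum_(i in W | P i) #|outn t W i| <= \sum_(i in W | P i) n.
  by apply: leq_sum => x _; apply: outn_le.
have b2 : 4 * \sum_(i in W | ~~ P i) #|outn t W i| <= \sum_(i in W | ~~ P i) n.
  rewrite big_distrr /=; apply: leq_sum => x /andP[_]; rewrite /P; lia.
rewrite c1 in b1 e2; rewrite c2 in b2 e2.
rewrite e1 in ds.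
change (n <= 8 * #|[set x | (x \in W) && P x]|).
set L := #|[set x | (x \in W) && P x]| in b1 e2 *.
set Lc := #|[set x | (x \in W) && ~~ P x]| in b2 e2.
set S1 := \sum_(i in W | P i) _ in ds b1.
set S2 := \sum_(i in W | ~~ P i) _ in ds b2.
have : 2 * (n * n) <= 2 * n + 4 * (L * n) + Lc * n by lia.
have LE : L <= n.
  by apply: subset_leq_card; apply/subsetP => x; rewrite inE => /andP[].
have LcE : L + Lc = n.
  rewrite /L /Lc /n -(cardsID [set x | P x] W); congr (_ + _); apply: eq_card => x; rewrite !inE // andbC //.
have -> : Lc = n - L by lia.
move=> h.
have : n * (n - 2) <= n * (3 * L).
  rewrite mulnBl in h; rewrite mulnBr (mulnC n (3 * L)) -mulnA.
  have : L * n <= n * n by rewrite leq_mul2r LE orbT.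
  lia.
rewrite leq_mul2l; case/orP => [/eqP|]; lia.
Qed.


Lemma gset0 h (VT : finType) (t : rel VT) v0 (kap : 'I_h -> nat) W :
  0 < #|gset t v0 kap set0 W|.
Proof.
apply/card_gt0P; exists [ffun => v0]; rewrite inE /goodf; apply/andP; split.
  by apply/forallP => x; rewrite inE ffunE.
by apply/forallP => u; apply/forallP => v; rewrite inE.
Qed.

Lemma sat (R : realFieldType) (k : nat) : exists c : R, (0 < c)%R /\ (c <= 1)%R /\
  forall h (VT : finType) (t : rel VT) (v0 : VT) (kap : 'I_h -> nat), injective kap ->
  (forall x y, x != y -> t x y || t y x) ->
  forall (B : {set 'I_h}) (W : {set VT}), #|B| = k -> (0 < k -> 2 ^ k.-1 <= #|W|) ->
  (c * (#|W|%:R) ^+ k <= (#|gset t v0 kap B W|)%:R)%R.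
Proof.
elim: k => [|k [c [c0 [c1 IH]]]].
  exists 1%R; split; first exact: ltr01; split; first by [].
  move=> h VT t v0 kap _ _ B W /eqP; rewrite cards_eq0 => /eqP -> _.
  by rewrite expr0 mulr1 ler1n gset0.
pose N := (2 ^ (k.+1 * k.+1) * 8 * 4 ^ k)%N.
have N0 : (0 < N)%N by rewrite /N !muln_gt0 !expn_gt0.
have N0R : (0 < N%:R :> R)%R by rewrite ltr0n.
exists (c / N%:R)%R; split; first by rewrite divr_gt0.
split.
  rewrite ler_pdivrMr // mul1r; apply: (le_trans c1); rewrite ler1n //.
move=> h VT t v0 kap kinj tot B W cB hW.
have [u1 u1B] : exists u, u \in B by apply/card_gt0P; rewrite cB.
case: (arg_minnP kap u1B) => u0 u0B kmin.
have st := @step h VT t v0 kap B W u0 kinj u0B kmin.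
have u0B' : u0 \in B by [].
have cB' : #|B :\ u0| = k by move: cB; rewrite (cardsD1 u0 B) u0B' add1n; case.
set n := #|W| in hW *.
set G := #|gset t v0 kap B W| in st *.
have key : forall x, (0 < k -> 2 ^ k.-1 <= #|outn t W x|) ->
   (c * #|outn t W x|%:R ^+ k <= #|gset t v0 kap (B :\ u0) (outn t W x)|%:R)%R.
  by move=> x; apply: IH.
have stR : ((\sum_(x in W) #|gset t v0 kap (B :\ u0) (outn t W x)|)%:R <= G%:R :> R)%R.
  by rewrite ler_nat.
have [k0|kpos] := posnP k.
  have h1 : (c * n%:R <= G%:R)%R.
    apply: le_trans stR; rewrite natr_sum.
    have -> : (c * n%:R = \sum_(x in W) c)%R by rewrite sumr_const mulr_natr.
    apply: ler_sum => x _; have := key x; rewrite k0 expr0 mulr1; apply; by [].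
  apply: le_trans h1; rewrite k0 expr1 ler_wpM2r // ler_pdivrMr // ler_peMr //.
    by rewrite ltW.
  by rewrite ler1n.
have nk : (2 ^ k <= n)%N by apply: hW.
have e2k : 2 ^ k = 2 * 2 ^ k.-1 by rewrite -expnS prednK.
have [small|large] := ltnP n (2 ^ k.+1).
  have n2 : (2 <= n)%N by move: nk; rewrite e2k; have := expn_gt0 2 k.-1; lia.
  have [x xW hx] := max_deg tot n2.
  have dx : (2 ^ k.-1 <= #|outn t W x|)%N by lia.
  have := key x (fun _ => dx).
  set gx := #|gset _ _ _ _ _| => hgx.
  have gx0 : (0 < gx)%N.
    rewrite -(ltr0n R); apply: lt_le_trans hgx.
    rewrite mulr_gt0 // exprn_gt0 // ltr0n; apply: leq_trans dx; exact: expn_gt0.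
  have G1 : (1 <= G)%N.
    apply: leq_trans st; rewrite (bigD1 x) //=; exact: leq_trans gx0 (leq_addr _ _).
  apply: (@le_trans _ _ 1%R); last by rewrite ler1n.
  rewrite mulrAC ler_pdivrMr // mul1r.
  apply: (@le_trans _ _ (n%:R ^+ k.+1)%R).
    rewrite ler_piMl // exprn_ge0 //.
  rewrite -natrX ler_nat /N.
  apply: (@leq_trans (2 ^ (k.+1 * k.+1))); last by rewrite -mulnA leq_pmulr // muln_gt0 expn_gt0.
  rewrite expnM.
  by rewrite leq_exp2r // ltnW.
have n4 : (4 <= n)%N.
  apply: leq_trans large; rewrite expnS e2k; have := expn_gt0 2 k.-1; lia.
have mh := many_high tot n4.
set P := fun x => (n <= 4 * #|outn t W x|)%N.
set L := [set x | (x \in W) && P x] in mh.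
have dL : forall x, x \in L -> (2 ^ k.-1 <= #|outn t W x|)%N.
  move=> x; rewrite inE => /andP[_]; rewrite /P; move: large; rewrite expnS e2k; lia.
set D := (\sum_(x in L) #|outn t W x| ^ k)%N.
have hD : (c * D%:R <= G%:R)%R.
  apply: le_trans stR; rewrite /D !natr_sum mulr_sumr.
  apply: (@le_trans _ _ (\sum_(x in L) #|gset t v0 kap (B :\ u0) (outn t W x)|%:R)%R).
    by apply: ler_sum => x xL; rewrite natrX; apply: key => _; apply: dL.
  rewrite -!natr_sum ler_nat.
  rewrite [X in (_ <= X)%N](bigID P) /=.
  apply: leq_trans (leq_addr _ _); apply: eq_leq; apply: eq_bigl => x; by rewrite inE.
have hnD : (n ^ k.+1 <= 8 * 4 ^ k * D)%N.
  rewrite expnS -mulnA; apply: leq_trans (leq_mul mh (leqnn _)) _.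
  rewrite -mulnA leq_mul2l /=.
  rewrite -sum_nat_const big_distrr /=; apply: leq_sum => x xL.
  rewrite -expnMn leq_exp2r //; move: xL; rewrite inE => /andP[_]; by [].
rewrite mulrAC ler_pdivrMr //.
apply: (@le_trans _ _ (c * (8 * 4 ^ k * D)%:R)%R).
  apply: ler_wpM2l; first exact: ltW.
  by rewrite -natrX ler_nat.
rewrite natrM mulrCA mulrC; apply: ler_pM => //.
  by apply: mulr_ge0; [exact: ltW|].
rewrite ler_nat /N -mulnA leq_pmull // expn_gt0.
by [].
Qed.


Definition erel h l (e : rel 'I_h) (part : 'I_h -> 'I_l) : rel 'I_h :=
  [rel x y | e x y && (part x == part y)].

Definition rho h l (e : rel 'I_h) (part : 'I_h -> 'I_l) (u : 'I_h) : nat :=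
  #|[set w | connect (erel e part) w u]|.

Definition kapf h l (e : rel 'I_h) (part : 'I_h -> 'I_l) (u : 'I_h) : nat :=
  rho e part u * h + u.

Lemma kap_inj h l (e : rel 'I_h) (part : 'I_h -> 'I_l) : injective (kapf e part).
Proof.
move=> u v; rewrite /kapf => E; apply/val_inj => /=.
have hu := ltn_ord u; have hv := ltn_ord v.
have := congr1 (fun n => n %% h) E; rewrite /= !modnMDl !modn_small //.
Qed.

Lemma path_part h l (e : rel 'I_h) (part : 'I_h -> 'I_l) v p :
  path (erel e part) v p -> all (fun y => part y == part v) p.
Proof.
elim: p v => [//|y p IH] v /= /andP[/andP[_ /eqP pv] pp].
by rewrite pv eqxx /=; apply: IH.
Qed.

Lemma kap_edge h l (e : rel 'I_h) (part : 'I_h -> 'I_l) :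
  (forall i, acyclic_on e (block part i)) ->
  forall u v, e u v -> part u = part v -> kapf e part u < kapf e part v.
Proof.
move=> acyc u v euv puv.
have : rho e part u < rho e part v.
  apply: proper_card; apply/properP; split.
    apply/subsetP => w; rewrite !inE => cwu.
    apply: connect_trans cwu (connect1 _); rewrite /erel /= euv puv eqxx //.
  exists v; first by rewrite inE connect0.
  rewrite inE; apply/negP => /connectP[p pp up].
  have := @acyc (part u) u (v :: p).
  rewrite /block inE eqxx => /(_ isT).
  have allp := path_part pp.
  have -> : all (mem [set x | part x == part u]) (v :: p).
    rewrite /= inE puv eqxx /=; apply/allP => y yp; rewrite inE.
    by rewrite in_set; move/allP: allp => /(_ y yp).
  move=> /(_ isT).
  have -> : path e u (v :: p).
    by rewrite /= euv /=; apply: sub_path pp => x y /andP[].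
  by move=> /(_ isT); rewrite /= -up => /(_ erefl).
move=> lt; rewrite /kapf.
have := ltn_ord u; nia.
Qed.


Definition homs h (VT : finType) (e : rel 'I_h) (t : rel VT) : {set {ffun 'I_h -> VT}} :=
  [set f : {ffun 'I_h -> VT} | [forall u, forall v, e u v ==> t (f u) (f v)] && injectiveb f].

Lemma copies_bound h (VT : finType) (e : rel 'I_h) (t : rel VT) :
  #|homs e t| <= ncopies e t * h.+1 ^ h.
Proof.
pose cp (f : {ffun 'I_h -> VT}) : {set VT} * {set (VT * VT)} :=
  (f @: [set: 'I_h], [set (f p.1, f p.2) | p in [set q : 'I_h * 'I_h | e q.1 q.2]]).
pose idx (f : {ffun 'I_h -> VT}) : {ffun 'I_h -> 'I_h.+1} :=
  [ffun x => inord (index (f x) (enum (f @: [set: 'I_h])))].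
have idxK : forall f x, nat_of_ord (idx f x) = index (f x) (enum (f @: [set: 'I_h])).
  move=> f x; rewrite ffunE inordK // ltnS.
  apply: leq_trans (index_size _ _) _.
  by rewrite -cardE (leq_trans (leq_imset_card _ _)) // cardsT card_ord.
have inj : {in homs e t &, injective (fun f => (cp f, idx f))}.
  move=> f g _ _ [E1 _ E2]; apply/ffunP => x.
  have : nat_of_ord (idx f x) = idx g x by rewrite E2.
  rewrite !idxK E1 => Ei.
  rewrite -(nth_index (f x) (_ : f x \in enum (g @: [set: 'I_h]))).
    rewrite Ei nth_index // mem_enum imset_f //.
  by rewrite -E1 mem_enum imset_f.
have cF : h.+1 ^ h = #|[set: {ffun 'I_h -> 'I_h.+1}]| by rewrite cardsT card_ffun !card_ord.
rewrite -(card_in_imset inj) /ncopies cF -cardsX.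
apply: subset_leq_card; apply/subsetP => _ /imsetP[f fH ->].
rewrite !inE andbT /is_copy /=.
move: fH; rewrite inE => /andP[/forallP hom finj].
apply/andP; split.
  apply/forallP => p; apply/implyP => /imsetP[q]; rewrite inE => eq ->.
  by have := hom q.1 => /forallP/(_ q.2); rewrite eq.
by apply/existsP; exists f; rewrite finj !eqxx.
Qed.


Lemma card_fset (aT rT : finType) (A : aT -> {set rT}) :
  #|[set f : {ffun aT -> rT} | [forall x, f x \in A x]]| = \prod_x #|A x|.
Proof.
have -> : \prod_x #|A x| = #|family (fun x => mem (A x))|.
  by rewrite card_family /image_mem foldrE big_map enumT.
apply: eq_card => f; rewrite inE; apply/forallP/familyP => H x; exact: H.
Qed.

Definition satP (R : realFieldType) (k : nat) (c : R) : Prop :=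
  forall h (VT : finType) (t : rel VT) (v0 : VT) (kap : 'I_h -> nat), injective kap ->
  (forall x y, x != y -> t x y || t y x) ->
  forall (B : {set 'I_h}) (W : {set VT}), #|B| = k -> (0 < k -> 2 ^ k.-1 <= #|W|) ->
  (c * (#|W|%:R) ^+ k <= (#|gset t v0 kap B W|)%:R)%R.

Lemma satP_mono (R : realFieldType) k (c c' : R) : satP k c -> (0 <= c')%R -> (c' <= c)%R -> satP k c'.
Proof.
move=> H c0 le h VT t v0 kap ki tot B W cB hW.
apply: le_trans (H h VT t v0 kap ki tot B W cB hW).
by apply: ler_wpM2r => //; rewrite exprn_ge0.
Qed.

Lemma sat_all (R : realFieldType) (K : nat) : exists c : R, (0 < c)%R /\ (c <= 1)%R /\
  forall k, k <= K -> satP k c.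
Proof.
elim: K => [|K [c [c0 [c1 H]]]].
  have [c [c0 [c1 H]]] := sat R 0; exists c; split => //; split => // k.
  by rewrite leqn0 => /eqP ->; exact: H.
have [c' [c0' [c1' H']]] := sat R K.+1.
exists (c * c')%R; split; first by rewrite mulr_gt0.
split; first by rewrite mulr_ile1 // ltW.
move=> k; rewrite leq_eqVlt => /orP[/eqP ->|].
  apply: satP_mono H' _ _; first by rewrite mulr_ge0 // ltW.
  by rewrite ler_piMl // ltW.
rewrite ltnS => kK; apply: satP_mono (H k kK) _ _; first by rewrite mulr_ge0 // ltW.
by rewrite ler_piMr // ltW.
Qed.


Lemma bad_bound (R : realFieldType) h l (part : 'I_h -> 'I_l) (VT : finType)
  (W : 'I_l -> {set VT}) (t : rel VT) (v0 : VT) (eta : R) (u v : 'I_h) :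
  (0 <= eta)%R -> part u != part v ->
  (1 - eta <= dens R t (W (part u)) (W (part v)))%R ->
  (#|[set f : {ffun 'I_h -> VT} | [forall x, f x \in W (part x)] && ~~ t (f u) (f v)]|%:R
     <= eta * (\prod_x #|W (part x)|)%:R)%R.
Proof.
move=> eta0 puv hd.
have uv : u != v by apply: contraNneq puv => ->.
have vu : v != u by rewrite eq_sym.
set Wi := W (part u); set Wj := W (part v).
set BP := [set p in setX Wi Wj | ~~ t p.1 p.2].
set GP := [set p in setX Wi Wj | t p.1 p.2].
have cP : #|GP| + #|BP| = #|Wi| * #|Wj|.
  rewrite -cardsX -(cardsID [set p | t p.1 p.2] (setX Wi Wj)); congr (_ + _);
  apply: eq_card => p; rewrite !inE // andbC //.
pose A' x := if (x == u) || (x == v) then [set v0] else W (part x).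
set F' := [set g : {ffun 'I_h -> VT} | [forall x, g x \in A' x]].
have cF' : #|F'| = \prod_x #|A' x| by rewrite card_fset.
have cM : \prod_x #|W (part x)| = #|Wi| * #|Wj| * #|F'|.
  rewrite cF' (bigD1 u) //= (bigD1 v) //= [in RHS](bigD1 u) //= [in RHS](bigD1 v) //=.
  rewrite /A' eqxx /= (negbTE vu) eqxx orbT !cards1 !mul1n mulnA.
  congr (_ * _); apply: eq_bigr => x /andP[xv xu].
  by rewrite (negbTE xv) (negbTE xu).
set Bad := [set f : {ffun 'I_h -> VT} | _ && _].
have inj : #|Bad| <= #|BP| * #|F'|.
  rewrite -cardsX.
  pose m (f : {ffun 'I_h -> VT}) : (VT * VT) * {ffun 'I_h -> VT} :=
    ((f u, f v), [ffun x => if (x == u) || (x == v) then v0 else f x]).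
  rewrite -(@card_in_imset _ _ m); last first.
    move=> f g _ _ [Eu Ev E]; apply/ffunP => x.
    case: (eqVneq x u) => [->//|xu]; case: (eqVneq x v) => [->//|xv].
    have : [ffun x => if (x == u) || (x == v) then v0 else f x] x =
           [ffun x => if (x == u) || (x == v) then v0 else g x] x by rewrite E.
    by rewrite !ffunE (negbTE xu) (negbTE xv).
  apply: subset_leq_card; apply/subsetP => _ /imsetP[f + ->].
  rewrite inE => /andP[/forallP fW tf].
  rewrite !inE /= tf andbT; apply/andP; split.
    by apply/andP; split; [exact: fW u | exact: fW v].
  apply/forallP => x; rewrite ffunE /A'; case: ifP => _; first by rewrite inE.
  exact: fW.
have hBP : (#|BP|%:R <= eta * (#|Wi| * #|Wj|)%:R)%R.
  have [N0|Npos] := posnP (#|Wi| * #|Wj|).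
    have : #|BP| = 0 by move: cP; rewrite N0; lia.
    by move=> ->; rewrite N0 mulr0.
  move: hd; rewrite /dens -/Wi -/Wj -/GP ler_pdivlMr ?ltr0n // => hd.
  have : (#|GP|%:R + #|BP|%:R = (#|Wi| * #|Wj|)%:R :> R)%R by rewrite -natrD cP.
  set N := ((#|Wi| * #|Wj|)%:R : R)%R.
  move: hd; set g := (#|GP|%:R : R)%R; set b := (#|BP|%:R : R)%R.
  rewrite mulrBl mul1r => hd hs.
  have -> : b = (N - g)%R by rewrite -hs addrAC subrr add0r.
  rewrite lerBlDr -lerBlDl; exact: hd.
rewrite cM natrM.
apply: (@le_trans _ _ (#|BP|%:R * #|F'|%:R)%R).
  by rewrite -natrM ler_nat.
rewrite mulrA; apply: ler_wpM2r => //.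
Qed.


Lemma card_bigcup_le (I T : finType) (P : pred I) (S : I -> {set T}) :
  (#|\bigcup_(i | P i) S i| <= \sum_(i | P i) #|S i|)%N.
Proof.
elim/big_rec2: _ => [|i n U _ le]; first by rewrite cards0.
by rewrite (leq_trans (leq_card_setU _ _).1) ?leq_add2l.
Qed.

Unset Implicit Arguments. Set Strict Implicit.

Theorem lemma3p3 (R : realFieldType) (h : nat) (hpos : (0 < h)%N) :
  exists eta alpha : R, (0 < eta)%R /\ (0 < alpha)%R /\
  forall (e : rel 'I_h), oriented e ->
  forall (l : nat) (part : 'I_h -> 'I_l),
    (forall i : 'I_l, exists x, part x = i) ->
    (forall i : 'I_l, acyclic_on e (block part i)) ->
    (forall i j : 'I_l, (i < j)%N ->
       arrow e (block part i) (block part j) \/ arrow e (block part j) (block part i)) ->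
  forall (VT : finType) (t : rel VT), tournament t ->
  forall W : 'I_l -> {set VT},
    (forall i j : 'I_l, i != j -> [disjoint W i & W j]) ->
    (forall i : 'I_l, (2 ^ h.-1 <= #|W i|)%N) ->
    (forall i j : 'I_l, i != j -> arrow e (block part i) (block part j) ->
       (1 - eta <= dens R t (W i) (W j))%R) ->
    (alpha * \prod_(i < l) (#|W i|%:R) ^+ #|block part i| <= (ncopies e t)%:R)%R.
Proof.
have [c [c0 [c1 satc]]] := sat_all R h.
pose eta := (c ^+ h / (2 * h * h)%:R)%R.
pose alpha := (c ^+ h / (2 * h.+1 ^ h)%:R)%R.
have ch0 : (0 < c ^+ h)%R by rewrite exprn_gt0.
have eta0 : (0 < eta)%R by rewrite divr_gt0 // ltr0n !muln_gt0 hpos.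
exists eta, alpha; split => //; split.
  by rewrite divr_gt0 // ltr0n !muln_gt0 expn_gt0.
move=> e eor l part surj acyc arr VT t ttour W disj sizeW dns.
case: ttour => [[tirr tasym] ttot].
pose x0 : 'I_h := Ordinal hpos.
have [v0 _] : exists v0 : VT, v0 \in W (part x0).
  by apply/card_gt0P; apply: leq_trans (sizeW _); rewrite expn_gt0.
pose kap := kapf e part.
have kinj : injective kap := @kap_inj h l e part.
have kedge := kap_edge acyc.
pose J i := gset t v0 kap (block part i) (W i).
have bh : forall i, (#|block part i| <= h)%N.
  by move=> i; rewrite -[X in (_ <= X)%N](card_ord h) max_card.
have hJ : forall i, (c * #|W i|%:R ^+ #|block part i| <= #|J i|%:R)%R.
  move=> i; apply: (satc #|block part i|) => //.
  move=> _; apply: leq_trans (sizeW i); apply: leq_pexp2l => //.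
  have := bh i; lia.
pose Phi (G : {ffun 'I_l -> {ffun 'I_h -> VT}}) : {ffun 'I_h -> VT} := [ffun x => G (part x) x].
pose FJ := [set G : {ffun 'I_l -> {ffun 'I_h -> VT}} | [forall i, G i \in J i]].
have cFJ : #|FJ| = (\prod_i #|J i|)%N by rewrite card_fset.
pose Bad (u v : 'I_h) := [set f : {ffun 'I_h -> VT} | [forall x, f x \in W (part x)] && ~~ t (f u) (f v)].
pose cross (p : 'I_h * 'I_h) := e p.1 p.2 && (part p.1 != part p.2).
pose BadU := \bigcup_(p | cross p) Bad p.1 p.2.
have GJ : forall G, G \in FJ -> forall i, goodf t v0 kap (block part i) (W i) (G i).
  by move=> G; rewrite inE => /forallP H i; have := H i; rewrite inE.
have injPhi : {in FJ &, injective Phi}.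
  move=> G G' GF G'F E; apply/ffunP => i; apply/ffunP => x.
  have := GJ G GF i => /andP[/forallP/(_ x) + _].
  have := GJ G' G'F i => /andP[/forallP/(_ x) + _].
  rewrite /block inE; case: (eqVneq (part x) i) => [<- _ _|_ /eqP -> /eqP -> //].
  have : Phi G x = Phi G' x by rewrite E.
  by rewrite !ffunE.
have sub : Phi @: FJ \subset homs e t :|: BadU.
  apply/subsetP => _ /imsetP[G GF ->].
  have inW : forall x, Phi G x \in W (part x).
    move=> x; have := GJ G GF (part x) => /andP[/forallP/(_ x) + _].
    by rewrite /block inE eqxx ffunE.
  have same : forall u v, part u = part v -> (kap u < kap v)%N -> t (Phi G u) (Phi G v).
    move=> u v puv kuv; have := GJ G GF (part u) => /andP[_ /forallP/(_ u)/forallP/(_ v)].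
    by rewrite /block !inE eqxx puv eqxx kuv !ffunE puv /= => ->.
  case: (boolP (Phi G \in BadU)) => nB; first by rewrite inE nB orbT.
  have crossok : forall u v, e u v -> part u != part v -> t (Phi G u) (Phi G v).
    move=> u v euv puv; apply: contraNT nB => nt.
    apply/bigcupP; exists (u, v); first by rewrite /cross /= euv puv.
    rewrite inE /= nt andbT; apply/forallP => x; exact: inW.
  rewrite inE; apply/orP; left; rewrite inE; apply/andP; split.
    apply/forallP => u; apply/forallP => v; apply/implyP => euv.
    case: (eqVneq (part u) (part v)) => [puv|puv]; last exact: crossok.
    by apply: same => //; apply: kedge.
  apply/injectiveP => u v E.
  case: (eqVneq u v) => // uv; exfalso.
  case: (eqVneq (part u) (part v)) => [puv|puv].
    have : kap u != kap v by apply: contra uv => /eqP /kinj ->.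
    rewrite neq_ltn => /orP[] k.
      by have := same u v puv k; rewrite E tirr.
    by have := same v u (esym puv) k; rewrite E tirr.
  by have := disjointFr (disj _ _ puv) (inW u); rewrite E inW.
have cnt : (#|FJ| <= #|homs e t| + \sum_(p | cross p) #|Bad p.1 p.2|)%N.
  rewrite -(card_in_imset injPhi); apply: leq_trans (subset_leq_card sub) _.
  apply: leq_trans (leq_card_setU _ _).1 _; rewrite leq_add2l.
  exact: card_bigcup_le.
pose M := (\prod_x #|W (part x)|)%N.
have badb : forall p, cross p -> (#|Bad p.1 p.2|%:R <= eta * M%:R)%R.
  move=> [u v]; rewrite /cross /= => /andP[euv puv].
  apply: bad_bound => //; first exact: ltW.
  apply: dns => //.
  have contra : arrow e (block part (part v)) (block part (part u)) -> False.
    by move=> ar; have := ar v u; rewrite /block !inE !eqxx euv => /(_ isT isT).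
  case: (ltngtP (part u) (part v)) => [lt|gt|eq].
  - by case: (arr _ _ lt) => // /contra.
  - by case: (arr _ _ gt) => // /contra.
  - by move: puv; rewrite (val_inj eq) eqxx.
have sumb : ((\sum_(p | cross p) #|Bad p.1 p.2|)%:R <= (h * h)%:R * (eta * M%:R))%R.
  rewrite natr_sum.
  apply: (@le_trans _ _ (\sum_(p | cross p) (eta * M%:R))%R); first exact: ler_sum.
  rewrite big_mkcond /=.
  apply: (@le_trans _ _ (\sum_(p : 'I_h * 'I_h) (eta * M%:R))%R).
    apply: ler_sum => p _; case: (cross p) => //.
    by rewrite mulr_ge0 // ltW.
  by rewrite sumr_const card_prod card_ord mulr_natl.
have Mprod : (\prod_(i < l) (#|W i|%:R) ^+ #|block part i| = M%:R :> R)%R.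
  rewrite /M natr_prod (partition_big part predT) //=; apply: eq_bigr => i _.
  rewrite (eq_bigr (fun _ => #|W i|%:R)%R); last by move=> x /eqP ->.
  rewrite prodr_const; congr (_ ^+ _)%R; apply: eq_card => x; rewrite /block inE.
  by [].
have lh : (l <= h)%N.
  have : [set: 'I_l] \subset part @: [set: 'I_h].
    by apply/subsetP => i _; have [x <-] := surj i; rewrite imset_f.
  move/subset_leq_card; rewrite cardsT card_ord => le; apply: leq_trans le _.
  by rewrite (leq_trans (leq_imset_card _ _)) // cardsT card_ord.
have cl : (c ^+ h <= c ^+ l)%R by apply: ler_wiXn2l => //; exact: ltW.
have lowFJ : (c ^+ l * M%:R <= #|FJ|%:R)%R.
  rewrite cFJ natr_prod -Mprod.
  have -> : (c ^+ l = \prod_(i < l) c)%R by rewrite prodr_const card_ord.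
  rewrite -big_split /=; apply: ler_prod => i _.
  by rewrite hJ andbT mulr_ge0 ?exprn_ge0 // ltW.
have good := copies_bound e t.
rewrite Mprod /alpha.
have goodR : (#|homs e t|%:R <= (ncopies e t)%:R * (h.+1 ^ h)%:R :> R)%R.
  by rewrite -natrM ler_nat.
have cntR : (#|FJ|%:R <= #|homs e t|%:R + (\sum_(p | cross p) #|Bad p.1 p.2|)%:R :> R)%R.
  by rewrite -natrD ler_nat.
have etaE : ((h * h)%:R * eta = c ^+ h / 2)%R.
  have h0 : (h%:R != 0 :> R)%R by rewrite pnatr_eq0 -lt0n.
  have t0 : (2%:R != 0 :> R)%R by rewrite pnatr_eq0.
  rewrite /eta !natrM; field.
  exact: h0.
have M0 : (0 <= M%:R :> R)%R by [].
have X1 : (c ^+ h * M%:R <= c ^+ l * M%:R)%R by rewrite ler_wpM2r.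
set X := (c ^+ h * M%:R)%R in X1 *.
set Nc := ((ncopies e t)%:R : R)%R in goodR *.
set P := ((h.+1 ^ h)%:R : R)%R in goodR.
have P0 : (0 < P)%R by rewrite ltr0n expn_gt0.
have halfX : ((h * h)%:R * (eta * M%:R) = X / 2)%R by rewrite mulrA etaE mulrAC.
rewrite natrM -/P mulrAC ler_pdivrMr; last by rewrite mulr_gt0.
rewrite -/X.
have : (X <= #|homs e t|%:R + X / 2)%R.
  apply: le_trans X1 _; apply: le_trans lowFJ _; apply: le_trans cntR _.
  by rewrite lerD2l -halfX.
move: goodR; set g := (#|homs e t|%:R : R)%R => g1 g2.
have : (X / 2 <= g)%R by lra.
move=> g3.
have : (X <= 2 * g)%R by lra.
move=> g4; apply: le_trans g4 _.
rewrite mulrCA; apply: ler_wpM2l => //.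
Qed.
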